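(* Let $N,M\ge 1$, let $\varrho_0$ be a density operator on $\mathbb{C}^N\otimes\mathbb{C}^M$, let $p\in[0,1]$, let $\tau$ be any density operator on $\mathbb{C}^N\otimes\mathbb{C}^M$, and define the noise channel $D_p^\tau(\varrho):=p\,\tau\,\mathrm{Tr}(\varrho)+(1-p)\varrho$. For $x\in\{1,\ldots,N\}$ let $\widehat{O}_x$ be the oracle channel on $\mathcal{B}(\mathbb{C}^N\otimes\mathbb{C}^M)$ given by $\widehat{O}_x(|y\rangle\langle y'|\otimes\sigma)=(-1)^{\delta_{xy}+\delta_{xy'}}|y\rangle\langle y'|\otimes\sigma$. Let $k\ge1$ and let $T_1,T_1',\ldots,T_k,T_k'$ be arbitrary quantum channels (completely positive trace-preserving maps) on $\mathcal{B}(\mathbb{C}^N\otimes\mathbb{C}^M)$, not depending on $x$, and set $$\varrho_k^x=T_k'\widehat{O}_xT_kD_p^\tau\cdots D_p^\tau T_2'\widehat{O}_xT_2D_p^\tau T_1'\widehat{O}_xT_1D_p^\tau(\varrho_0).$$ Let $(E_y)_{y=1}^N$ be any POVM on $\mathbb{C}^N\otimes\mathbb{C}^M$. Then the average success probability $p_s:=\sum_{x=1}^N\frac1N\mathrm{Tr}[\varrho_k^xE_x]$ satisfies $$p_s\le\frac1N+\frac{8}{Np^2}\qquad\text{and}\qquad p_s\le 8\,\frac{k+1}{Np}.$$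
   Context: The $T_i,T_i'$ need not be unital. Composition of maps is written by juxtaposition. *)

(* Defs.v *)
(* Quantum operators on C^N (x) C^M are represented as
   matrices 'M[C]_(N * M); the basis vector |y> (x) |a> (y : 'I_N, a : 'I_M)
   is the index y * M + a (Kronecker convention, cf. real_closed.mxtens). *)
From HB Require Import structures.
From mathcomp Require Import all_boot all_order all_algebra.
From mathcomp Require Import complex mxtens.
Set Implicit Arguments.
Unset Strict Implicit.
Unset Printing Implicit Defensive.
Import Order.TTheory GRing.Theory Num.Theory.
Local Open Scope ring_scope.

Section Quantum.
Variable C : numClosedFieldType.

Definition adjmx m n (A : 'M[C]_(m, n)) : 'M[C]_(n, m) := (map_mx Num.conj A)^T.

(* positive semidefinite operator: <v, A v> >= 0 for every vector v
   (over C, this forces <v, A v> to be real, hence A hermitian) *)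
Definition psdmx n (A : 'M[C]_n) : Prop :=
  forall v : 'cV[C]_n, 0 <= (adjmx v *m A *m v) 0 0.

Definition density n (rho : 'M[C]_n) : Prop := psdmx rho /\ \tr rho = 1.

Definition linear_map n (T : 'M[C]_n -> 'M[C]_n) : Prop :=
  forall (a : C) (A B : 'M[C]_n), T (a *: A + B) = a *: T A + T B.

(* (id_k (x) T) acting on 'M_(k * n) = B(C^k (x) C^n), blockwise *)
Definition ampliate k n (T : 'M[C]_n -> 'M[C]_n) (X : 'M[C]_(k * n))
  : 'M[C]_(k * n) :=
  \matrix_(p, q)
    (T (\matrix_(i, j) X (mxtens_index ((mxtens_unindex p).1, i))
                         (mxtens_index ((mxtens_unindex q).1, j))))
      (mxtens_unindex p).2 (mxtens_unindex q).2.

Definition completely_positive n (T : 'M[C]_n -> 'M[C]_n) : Prop :=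
  forall k (X : 'M[C]_(k * n)), psdmx X -> psdmx (ampliate T X).

Definition trace_preserving n (T : 'M[C]_n -> 'M[C]_n) : Prop :=
  forall A, \tr (T A) = \tr A.

Definition channel n (T : 'M[C]_n -> 'M[C]_n) : Prop :=
  [/\ linear_map T, completely_positive T & trace_preserving T].

Definition povm (I : finType) n (E : I -> 'M[C]_n) : Prop :=
  (forall i, psdmx (E i)) /\ \sum_(i : I) E i = 1%:M.

Definition noise n (p : C) (tau : 'M[C]_n) (rho : 'M[C]_n) : 'M[C]_n :=
  p *: (\tr rho *: tau) + (1 - p) *: rho.

Definition oracle N M (x : 'I_N) (A : 'M[C]_(N * M)) : 'M[C]_(N * M) :=
  \matrix_(i, j)
    ((-1) ^+ ((mxtens_unindex i).1 == x) * (-1) ^+ ((mxtens_unindex j).1 == x)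
     * A i j).

(* rho_k^x = T'_k O_x T_k D ... T'_1 O_x T_1 D (rho_0);
   the channels T_{j+1}, T'_{j+1} are T j, T' j *)
Fixpoint evolve N M (p : C) (tau rho0 : 'M[C]_(N * M))
  (T T' : nat -> 'M[C]_(N * M) -> 'M[C]_(N * M)) (x : 'I_N) (k : nat)
  : 'M[C]_(N * M) :=
  match k with
  | 0 => rho0
  | j.+1 => T' j (oracle x (T j (noise p tau (evolve p tau rho0 T T' x j))))
  end.

Definition success_prob N M (p : C) (tau rho0 : 'M[C]_(N * M))
  (T T' : nat -> 'M[C]_(N * M) -> 'M[C]_(N * M)) (k : nat)
  (E : 'I_N -> 'M[C]_(N * M)) : C :=
  \sum_(x < N) N%:R^-1 * \tr (evolve p tau rho0 T T' x k *m E x).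

End Quantum.

(* Main.v *)
Require Import Defs.
From HB Require Import structures.
From mathcomp Require Import all_boot all_order all_algebra.
From mathcomp Require Import complex mxtens spectral ring lra.
Import Order.TTheory GRing.Theory Num.Theory.
Local Open Scope ring_scope.
Set Implicit Arguments. Unset Strict Implicit. Unset Printing Implicit Defensive.

Section Gen.
Variable C : numClosedFieldType.

Lemma adjmxE m n (A : 'M[C]_(m,n)) i j : adjmx A i j = (A j i)^*.
Proof. by rewrite /adjmx !mxE. Qed.

Lemma adjmxK m n (A : 'M[C]_(m,n)) : adjmx (adjmx A) = A.
Proof. by apply/matrixP=> i j; rewrite !adjmxE conjCK. Qed.

Lemma adjmxM m n p (A : 'M[C]_(m,n)) (B : 'M[C]_(n,p)) :
  adjmx (A *m B) = adjmx B *m adjmx A.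
Proof.
apply/matrixP=> i j; rewrite adjmxE !mxE rmorph_sum; apply: eq_bigr => k _.
by rewrite !adjmxE rmorphM mulrC.
Qed.

Lemma adjmxD m n (A B : 'M[C]_(m,n)) : adjmx (A + B) = adjmx A + adjmx B.
Proof. by apply/matrixP=> i j; rewrite !(adjmxE, mxE) rmorphD. Qed.

Lemma adjmxN m n (A : 'M[C]_(m,n)) : adjmx (- A) = - adjmx A.
Proof. by apply/matrixP=> i j; rewrite !(adjmxE, mxE) rmorphN. Qed.

Lemma adjmxZ m n a (A : 'M[C]_(m,n)) : adjmx (a *: A) = a^* *: adjmx A.
Proof. by apply/matrixP=> i j; rewrite !(adjmxE, mxE) rmorphM. Qed.

Lemma adjmx1 n : adjmx (1%:M : 'M[C]_n) = 1%:M.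
Proof. by apply/matrixP=> i j; rewrite !(adjmxE, mxE) eq_sym rmorph_nat. Qed.

Lemma adjmx0 m n : adjmx (0 : 'M[C]_(m,n)) = 0.
Proof. by apply/matrixP=> i j; rewrite !(adjmxE, mxE) rmorph0. Qed.

Lemma mxtrace_adj n (A : 'M[C]_n) : \tr (adjmx A) = (\tr A)^*.
Proof. by rewrite /mxtrace rmorph_sum; apply: eq_bigr => i _; rewrite adjmxE. Qed.

Lemma psd_conj m n (Y : 'M[C]_n) (B : 'M[C]_(m, n)) :
  psdmx Y -> psdmx (B *m Y *m adjmx B).
Proof.
move=> hY v; have := hY (adjmx B *m v).
by rewrite adjmxM adjmxK !mulmxA.
Qed.

Lemma tr_psd m r (Y : 'M[C]_m) (F : 'M[C]_(r, m)) :
  psdmx Y -> 0 <= \tr (F *m Y *m adjmx F).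
Proof.
move=> hY; rewrite /mxtrace; apply: sumr_ge0 => i _.
have := hY (adjmx (row i F)); rewrite adjmxK.
suff -> : (F *m Y *m adjmx F) i i = (row i F *m Y *m adjmx (row i F)) 0 0 by [].
rewrite !mxE; apply: eq_bigr => k _; rewrite !adjmxE !mxE.
congr (_ * _); apply: eq_bigr => l _; by rewrite !mxE.
Qed.

Lemma adjmx_diag m (d : 'rV[C]_m) : adjmx (diag_mx d) = diag_mx (map_mx Num.conj d).
Proof.
apply/matrixP=> i j; rewrite adjmxE !mxE eq_sym.
by case: eqP => [->|_]; rewrite ?mulr1n ?mulr0n ?rmorph0.
Qed.

End Gen.
Section Qf.
Variables (C : numClosedFieldType) (m r : nat) (Y : 'M[C]_m).
Definition sf (X Z : 'M[C]_(r, m)) := \tr (X *m Y *m adjmx Z).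

Lemma sfDl X1 X2 Z : sf (X1 + X2) Z = sf X1 Z + sf X2 Z.
Proof. by rewrite /sf !mulmxDl mxtraceD. Qed.
Lemma sfDr X Z1 Z2 : sf X (Z1 + Z2) = sf X Z1 + sf X Z2.
Proof. by rewrite /sf adjmxD mulmxDr mxtraceD. Qed.
Lemma sfZl a X Z : sf (a *: X) Z = a * sf X Z.
Proof. by rewrite /sf -!scalemxAl mxtraceZ. Qed.
Lemma sfZr a X Z : sf X (a *: Z) = a^* * sf X Z.
Proof. by rewrite /sf adjmxZ -scalemxAr mxtraceZ. Qed.
Lemma sfNl X Z : sf (- X) Z = - sf X Z.
Proof. by rewrite -scaleN1r sfZl mulN1r. Qed.
Lemma sfNr X Z : sf X (- Z) = - sf X Z.
Proof. by rewrite -scaleN1r sfZr conjCN1 mulN1r. Qed.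

Lemma sf_ineq (l : C) X Z : psdmx Y -> 0 < l ->
  sf (X + Z) (X + Z) <= (1 + l) * sf X X + (1 + l^-1) * sf Z Z.
Proof.
move=> hY hl.
have h0 := tr_psd (l *: X - Z) hY.
have lr : l^* = l by apply: conj_Creal; apply: gtr0_real.
have ln0 : l != 0 by rewrite gt_eqF.
move: h0.
rewrite -[\tr _]/(sf (l *: X - Z) (l *: X - Z)) !(sfDl, sfDr, sfNl, sfNr, sfZl, sfZr) lr => h0.
rewrite -subr_ge0.
set a := sf X X in h0 *; set b := sf Z Z in h0 *; set c := sf X Z in h0 *;
set d := sf Z X in h0 *.
have -> : (1 + l) * a + (1 + l^-1) * b - (a + c + (d + b)) =
   l^-1 * (l * (l * a - c) - (l * d - b)).
  by field.
by rewrite mulr_ge0 // invr_ge0 ltW.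
Qed.
End Qf.

Section Blk.
Variables (C : numClosedFieldType) (n : nat).
Local Notation b0 := (@Ordinal 2 0 isT).
Local Notation b1 := (@Ordinal 2 1 isT).

Definition idx2 (a : 'I_2) (i : 'I_n) : 'I_(2 * n) := mxtens_index (a, i).
Definition blk (a b : 'I_2) (Y : 'M[C]_(2 * n)) : 'M[C]_n :=
  \matrix_(i, j) Y (idx2 a i) (idx2 b j).
Definition row2 r (A0 A1 : 'M[C]_(r, n)) : 'M[C]_(r, 2 * n) :=
  \matrix_(i, p) (if (mxtens_unindex p).1 == b0 then A0 else A1) i
                   (mxtens_unindex p).2.

Lemma sum_tens (F : 'I_(2 * n) -> C) :
  \sum_(p < 2 * n) F p = \sum_(i < n) F (idx2 b0 i) + \sum_(i < n) F (idx2 b1 i).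
Proof.
have -> : \sum_(p < 2 * n) F p = \sum_(u : 'I_2 * 'I_n) F (mxtens_index u).
  apply: reindex => /=.
  by exists (@mxtens_unindex 2 n) => u _; rewrite (mxtens_indexK, mxtens_unindexK).
transitivity (\sum_(a < 2) \sum_(i < n) F (mxtens_index (a, i))).
  by rewrite pair_bigA; apply: eq_bigr => -[].
rewrite big_ord_recl big_ord_recl big_ord0 addr0.
by congr (_ + _); apply: eq_bigr => i _; congr F; congr mxtens_index; congr (_, _);
  apply: val_inj.
Qed.

Lemma unidx2 a i : mxtens_unindex (idx2 a i) = (a, i).
Proof. exact: mxtens_indexK. Qed.

Definition rblk (a : 'I_2) (Y : 'M[C]_(2 * n)) : 'M[C]_(n, 2 * n) :=
  \matrix_(k, q) Y (idx2 a k) q.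

Lemma row2E0 r (A0 A1 : 'M[C]_(r, n)) i k : row2 A0 A1 i (idx2 b0 k) = A0 i k.
Proof. by rewrite mxE unidx2. Qed.
Lemma row2E1 r (A0 A1 : 'M[C]_(r, n)) i k : row2 A0 A1 i (idx2 b1 k) = A1 i k.
Proof. by rewrite mxE unidx2. Qed.

Lemma row2_mulr r (A0 A1 : 'M[C]_(r, n)) (Y : 'M[C]_(2 * n)) :
  row2 A0 A1 *m Y = A0 *m rblk b0 Y + A1 *m rblk b1 Y.
Proof.
apply/matrixP=> i q; rewrite !mxE sum_tens; congr (_ + _);
  apply: eq_bigr => k _; by rewrite ?row2E0 ?row2E1 mxE.
Qed.

Lemma rblk_mul (a : 'I_2) r (B0 B1 : 'M[C]_(r, n)) (Y : 'M[C]_(2 * n)) :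
  rblk a Y *m adjmx (row2 B0 B1) = blk a b0 Y *m adjmx B0 + blk a b1 Y *m adjmx B1.
Proof.
apply/matrixP=> k j; rewrite !mxE sum_tens; congr (_ + _);
  apply: eq_bigr => l _; by rewrite !adjmxE ?row2E0 ?row2E1 !mxE.
Qed.

Lemma row2_mul r (A0 A1 B0 B1 : 'M[C]_(r, n)) (Y : 'M[C]_(2 * n)) :
  row2 A0 A1 *m Y *m adjmx (row2 B0 B1) =
  A0 *m blk b0 b0 Y *m adjmx B0 + A0 *m blk b0 b1 Y *m adjmx B1 +
  A1 *m blk b1 b0 Y *m adjmx B0 + A1 *m blk b1 b1 Y *m adjmx B1.
Proof.
rewrite row2_mulr mulmxDl -!mulmxA !rblk_mul !mulmxDr !mulmxA addrA.
by [].
Qed.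

Lemma row2D r (A0 A1 B0 B1 : 'M[C]_(r, n)) :
  row2 (A0 + B0) (A1 + B1) = row2 A0 A1 + row2 B0 B1.
Proof. by apply/matrixP=> i p; rewrite !mxE; case: ifP; rewrite mxE. Qed.

Definition diag2 (d0 d1 : 'rV[C]_n) : 'M[C]_(2 * n) :=
  diag_mx (\row_p (if (@mxtens_unindex 2 n p).1 == b0 then d0 else d1) 0
                    (@mxtens_unindex 2 n p).2).

Lemma blk_diag2_0 d0 d1 Y a b :
  blk a b (diag2 d0 d1 *m Y *m adjmx (diag2 d0 d1)) =
  diag_mx (if a == b0 then d0 else d1) *m blk a b Y *m
    adjmx (diag_mx (if b == b0 then d0 else d1)).
Proof.
rewrite /diag2 !adjmx_diag !mul_mx_diag !mul_diag_mx.
apply/matrixP=> i j; rewrite !mxE !unidx2.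
by case: ifP; case: ifP.
Qed.

Lemma blk_inj (Y Y' : 'M[C]_(2 * n)) :
  (forall a b, blk a b Y = blk a b Y') -> Y = Y'.
Proof.
move=> h; apply/matrixP=> p q.
case: (mxtens_indexP p) => a i; case: (mxtens_indexP q) => b j.
by have /matrixP/(_ i j) := h a b; rewrite !mxE.
Qed.

Lemma blk_ampl (T : 'M[C]_n -> 'M[C]_n) (Y : 'M[C]_(2 * n)) a b :
  blk a b (ampliate T Y) = T (blk a b Y).
Proof.
by apply/matrixP=> i j; rewrite /blk /ampliate !mxE /idx2 !mxtens_indexK.
Qed.

Lemma mul_row2 m r (B : 'M[C]_(m, r)) (A0 A1 : 'M[C]_(r, n)) :
  B *m row2 A0 A1 = row2 (B *m A0) (B *m A1).
Proof.
apply/matrixP=> i p; rewrite !mxE.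
under eq_bigr => k _ do rewrite mxE.
by case: ifP => _; rewrite mxE.
Qed.

Lemma row2_diag2 r (A0 A1 : 'M[C]_(r, n)) d0 d1 :
  row2 A0 A1 *m diag2 d0 d1 = row2 (A0 *m diag_mx d0) (A1 *m diag_mx d1).
Proof.
apply/matrixP=> i p; rewrite /diag2 !mul_mx_diag !mxE.
by case: ifP => _; rewrite mxE.
Qed.

Definition blkJ (X : 'M[C]_n) : 'M[C]_(2 * n) :=
  adjmx (row2 1%:M 1%:M) *m X *m row2 1%:M 1%:M.

Lemma blk_blkJ X a b : blk a b (blkJ X) = X.
Proof.
have h : forall r (A : 'M[C]_(r, n)) i a k, row2 A A i (idx2 a k) = A i k.
  by move=> r A i c k; rewrite mxE unidx2; case: ifP.
transitivity (adjmx 1%:M *m X *m 1%:M); last by rewrite adjmx1 mul1mx mulmx1.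
apply/matrixP=> i j; rewrite !mxE; apply: eq_bigr => q _; rewrite h; congr (_ * _).
by rewrite !mxE; apply: eq_bigr => p _; rewrite !adjmxE h.
Qed.

End Blk.

Section Misc2.
Variables (C : numClosedFieldType) (n : nat).
Local Notation b0 := (@Ordinal 2 0 isT).
Local Notation b1 := (@Ordinal 2 1 isT).
Local Notation R2 := (row2 (1%:M : 'M[C]_n) (- 1%:M)).

Lemma psd_blkJ (X : 'M[C]_n) : psdmx X -> psdmx (blkJ X).
Proof.
by move=> hX; have := psd_conj (adjmx (row2 (1%:M : 'M[C]_n) 1%:M)) hX; rewrite adjmxK.
Qed.

Lemma dqE (Y : 'M[C]_(2 * n)) :
  sf Y R2 R2 = \tr (blk b0 b0 Y) - \tr (blk b0 b1 Y) - \tr (blk b1 b0 Y)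
               + \tr (blk b1 b1 Y).
Proof.
rewrite /sf row2_mul !adjmxN adjmx1 !mulmxN !mulNmx !mulmx1 !mul1mx opprK.
by rewrite !mxtraceD !raddfN.
Qed.

Lemma dq_ampl (T : 'M[C]_n -> 'M[C]_n) (Y : 'M[C]_(2 * n)) :
  trace_preserving T -> sf (ampliate T Y) R2 R2 = sf Y R2 R2.
Proof. by move=> hT; rewrite !dqE !blk_ampl !hT. Qed.

Lemma sfQ (V : 'M[C]_(2 * n)) (P : 'M[C]_n) :
  adjmx P = P -> P *m P = P ->
  sf V (row2 0 (2 *: P)) (row2 0 (2 *: P)) = 4 * \tr (P *m blk b1 b1 V).
Proof.
move=> hPa hPP; rewrite /sf row2_mul !adjmx0 !mulmx0 !mul0mx !add0r.
rewrite adjmxZ hPa -!scalemxAl -scalemxAr mxtraceZ mxtraceZ mxtrace_mulC mulmxA hPP.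
by rewrite rmorph_nat mulrA -natrM.
Qed.

Lemma sf_const (V : 'M[C]_(2 * n)) (P X : 'M[C]_n) :
  (forall a b, blk a b V = X) ->
  let Q := row2 0 (2 *: P) in sf V (R2 + Q) (R2 + Q) = sf V Q Q.
Proof.
move=> hV Q; rewrite !(sfDl, sfDr) /Q /sf !row2_mul !hV.
rewrite ?adjmx0 ?adjmxN ?adjmx1 ?mulmx0 ?mul0mx ?mulmxN ?mulNmx ?mulmx1 ?mul1mx.
rewrite ?addr0 ?add0r ?opprK ?mxtraceD ?raddfN ?mxtrace0.
ring.
Qed.

End Misc2.

Section Oracle.
Variables (C : numClosedFieldType) (N M : nat).
Local Notation n := (N * M).

Definition sgn (x : 'I_N) : 'rV[C]_n :=
  \row_i (-1) ^+ ((@mxtens_unindex N M i).1 == x).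
Definition prj (x : 'I_N) : 'M[C]_n :=
  diag_mx (\row_i ((@mxtens_unindex N M i).1 == x)%:R).

Lemma oracleE x (A : 'M[C]_n) :
  oracle x A = diag_mx (sgn x) *m A *m diag_mx (sgn x).
Proof.
apply/matrixP=> i j; rewrite mul_mx_diag mul_diag_mx !mxE.
by rewrite mulrAC.
Qed.

Lemma adj_sgn x : adjmx (diag_mx (sgn x)) = diag_mx (sgn x).
Proof.
rewrite adjmx_diag; congr diag_mx; apply/matrixP=> i j; rewrite !mxE.
by rewrite rmorphXn rmorphN1.
Qed.

Lemma sgn_sq x : diag_mx (sgn x) *m diag_mx (sgn x) = 1%:M.
Proof.
rewrite mulmx_diag -diag_const_mx; congr diag_mx; apply/matrixP=> i j.
by rewrite !mxE -exprD; case: (_ == x); rewrite ?expr0 // -signr_odd.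
Qed.

Lemma sgn_prj x : - diag_mx (sgn x) = - 1%:M + 2 *: prj x.
Proof.
apply/matrixP=> i j; rewrite !mxE.
case: (_ == x); rewrite ?expr1 ?expr0 //=.
  by case: (i == j); rewrite ?mulr1n ?mulr0n ?mulr1 ?mulr0 ?oppr0 ?addr0 //;
    rewrite opprK; ring.
by case: (i == j); rewrite ?mulr1n ?mulr0n ?mulr1 ?mulr0 ?oppr0 ?addr0.
Qed.

Lemma adj_prj x : adjmx (prj x) = prj x.
Proof.
rewrite adjmx_diag; congr diag_mx; apply/matrixP=> i j; rewrite !mxE.
by rewrite rmorph_nat.
Qed.

Lemma prj_sq x : prj x *m prj x = prj x.
Proof.
rewrite mulmx_diag; congr diag_mx; apply/matrixP=> i j; rewrite !mxE.
by case: (_ == x); rewrite ?mulr1 ?mulr0.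
Qed.

Lemma sum_prj : \sum_(x < N) prj x = 1%:M.
Proof.
apply/matrixP=> i j; rewrite summxE !mxE.
under eq_bigr => x _ do rewrite !mxE.
rewrite (bigD1 (@mxtens_unindex N M i).1) //= eqxx big1 ?addr0 // => y hy.
by rewrite eq_sym (negbTE hy) mul0rn.
Qed.

End Oracle.

Section Hybrid.
Variables (C : numClosedFieldType) (N M : nat).
Local Notation n := (N * M).
Variables (T T' : nat -> 'M[C]_n -> 'M[C]_n).
Hypothesis hT : forall j, channel (T j) /\ channel (T' j).
Local Notation b0 := (@Ordinal 2 0 isT).
Local Notation b1 := (@Ordinal 2 1 isT).
Local Notation R2 := (row2 (1%:M : 'M[C]_n) (- 1%:M)).

Fixpoint run (O : 'M[C]_n -> 'M[C]_n) (j m : nat) (s : 'M[C]_n) : 'M[C]_n :=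
  if m is m'.+1 then T' (j + m') (O (T (j + m') (run O j m' s))) else s.

Definition av (x : 'I_N) j s t := \tr (prj C M x *m T (j + t) (run id j t s)).

Lemma step (x : 'I_N) t (Y : 'M[C]_(2 * n)) : psdmx Y ->
  let V := ampliate (T t) Y in
  exists Y' : 'M[C]_(2 * n),
  [/\ psdmx Y', blk b0 b0 Y' = T' t (oracle x (T t (blk b0 b0 Y))),
      blk b1 b1 Y' = T' t (T t (blk b1 b1 Y)) &
      sf Y' R2 R2 = sf V (R2 + row2 0 (2 *: prj C M x)) (R2 + row2 0 (2 *: prj C M x))].
Proof.
move=> hY V.
have [[_ cpT tpT] [_ cpT' tpT']] := hT t.
pose W := diag2 (sgn C M x) (const_mx 1).
exists (ampliate (T' t) (W *m V *m adjmx W)); split.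
- by apply: cpT'; apply: psd_conj; apply: cpT.
- by rewrite blk_ampl blk_diag2_0 /= blk_ampl adj_sgn oracleE.
- by rewrite blk_ampl blk_diag2_0 /= blk_ampl diag_const_mx adjmx1 mul1mx mulmx1.
rewrite dq_ampl // /sf -!mulmxA -adjmxM !mulmxA row2_diag2 mul1mx diag_const_mx.
rewrite mulNmx mul1mx.
have -> : row2 (diag_mx (sgn C M x)) (- 1%:M) =
          diag_mx (sgn C M x) *m row2 1%:M (- diag_mx (sgn C M x)).
  by rewrite mul_row2 mulmx1 mulmxN sgn_sq.
rewrite adjmxM adj_sgn -!mulmxA mxtrace_mulC -!mulmxA sgn_sq mulmx1.
have -> : row2 1%:M (- diag_mx (sgn C M x)) = R2 + row2 0 (2 *: prj C M x).
  by rewrite -row2D addr0 sgn_prj.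
by rewrite !mulmxA.
Qed.

Lemma hyb (x : 'I_N) j s0 : psdmx s0 -> forall m, exists Y : 'M[C]_(2 * n),
  [/\ psdmx Y, blk b0 b0 Y = run (oracle x) j m s0, blk b1 b1 Y = run id j m s0 &
      sf Y R2 R2 <= 4 * m%:R * \sum_(t < m) av x j s0 t].
Proof.
move=> hs; elim=> [|m IH].
  exists (blkJ s0); split; rewrite ?blk_blkJ //; first exact: psd_blkJ.
  by rewrite dqE !blk_blkJ big_ord0 mulr0 subrr sub0r addNr.
case: m IH => [|m] IH.
  have [Y' [hY' e0 e1 ed]] := step x (j + 0) (psd_blkJ hs).
  exists Y'; split; rewrite ?e0 ?e1 ?blk_blkJ //.
  rewrite ed (@sf_const _ _ _ _ (T (j + 0) s0)); last by move=> a b; rewrite blk_ampl blk_blkJ.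
  rewrite sfQ ?adj_prj ?prj_sq // blk_ampl blk_blkJ big_ord1 /av /= mulr1.
  by [].
have [Y [hY e0 e1 ed]] := IH.
have [Y' [hY' e0' e1' ed']] := step x (j + m.+1) hY.
exists Y'; split; rewrite ?e0' ?e1' ?e0 ?e1 //.
have [[_ _ tpT] _] := hT (j + m.+1).
rewrite ed'.
set V := ampliate _ Y.
have hl : 0 < (m.+1%:R : C)^-1 by rewrite invr_gt0 ltr0Sn.
have [[_ cpT _] _] := hT (j + m.+1).
have hV : psdmx V by apply: cpT.
apply: le_trans (sf_ineq _ _ hV hl) _.
rewrite dq_ampl // sfQ ?adj_prj ?prj_sq // blk_ampl e1.
have hl1 : 0 <= 1 + (m.+1%:R : C)^-1 by rewrite addr_ge0 // ltW.
apply: le_trans (lerD (ler_wpM2l hl1 ed) (lexx _)) _.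
rewrite [\sum_(t < m.+2) _]big_ord_recr /= /av.
rewrite invrK le_eqVlt; apply/orP; left; apply/eqP.
have hm : (m.+1%:R : C) != 0 by rewrite pnatr_eq0.
rewrite -[m.+2]addn1 natrD.
change (run id j m.+1 s0) with (T' (j + m) (T (j + m) (run id j m s0))).
field; by rewrite addrC natr1 pnatr_eq0.
Qed.

End Hybrid.

Section Factor.
Variables (C : numClosedFieldType) (n : nat).

Definition bf (E : 'M[C]_n) (u w : 'cV[C]_n) := (adjmx u *m E *m w) 0 0.

Lemma bf_expand E u w c :
  bf E (u + c *: w) (u + c *: w) =
  bf E u u + c * bf E u w + c^* * bf E w u + c^* * c * bf E w w.
Proof.
rewrite /bf adjmxD adjmxZ !mulmxDl !mulmxDr -!scalemxAl -!scalemxAr.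
rewrite !mxE; ring.
Qed.

Lemma bf_delta E a b : bf E (delta_mx a 0) (delta_mx b 0) = E a b.
Proof.
rewrite /bf.
have -> : adjmx (delta_mx a 0 : 'cV[C]_n) = delta_mx 0 a.
  by apply/matrixP=> i j; rewrite adjmxE !mxE andbC rmorph_nat.
by rewrite -rowE -colE !mxE.
Qed.

Lemma psd_herm (E : 'M[C]_n) : psdmx E -> adjmx E = E.
Proof.
move=> hE; apply/matrixP=> i j; rewrite adjmxE.
have hr : forall v, bf E v v \is Num.real by move=> v; apply: ger0_real; apply: hE.
set ei : 'cV[C]_n := delta_mx i 0; set ej : 'cV[C]_n := delta_mx j 0.
have h1 := hr (ei + 1 *: ej); have h2 := hr (ei + 'i *: ej).
rewrite !bf_expand !bf_delta in h1 h2.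
have ri := hr ei; have rj := hr ej; rewrite !bf_delta in ri rj.
rewrite rmorph1 !mul1r in h1.
rewrite conjCi in h2.
have ii : ('i : C) * 'i + 1 = 0 by rewrite -expr2 sqrCi addNr.
have z1 : E i j + E j i \is Num.real.
  have := rpredB (rpredB h1 ri) rj.
  have -> : E i i + E i j + E j i + E j j - E i i - E j j = E i j + E j i by ring.
  by [].
have z2 : 'i * (E i j - E j i) \is Num.real.
  have := rpredB (rpredB h2 ri) rj.
  have -> : E i i + 'i * E i j + - 'i * E j i + - 'i * 'i * E j j - E i i - E j j
     = 'i * (E i j - E j i) - ('i * 'i + 1) * E j j by ring.
  by rewrite ii mul0r subr0.
move/CrealP: z1; move/CrealP: z2.
move=> e2 e1.
move: e1 e2; rewrite rmorphM rmorphB rmorphD /= conjCi => e1 e2.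
have hi : ('i : C) != 0 by rewrite neq0Ci.
have e3 : 'i * ((E i j)^* - E j i) *+ 2 = 0.
  have -> : 'i * ((E i j)^* - E j i) *+ 2 = 'i * ((E i j)^* + (E j i)^* - (E i j + E j i))
     - (- 'i * ((E i j)^* - (E j i)^*) - 'i * (E i j - E j i)) by ring.
  by rewrite e1 e2 !subrr mulr0 subr0.
move/eqP: e3; rewrite mulrn_eq0 /= mulf_eq0 (negbTE hi) /= subr_eq0 => /eqP h.
by rewrite -h conjCK.
Qed.

Lemma psd_entry m (Y : 'M[C]_m) (F : 'M[C]_(n, m)) i :
  psdmx Y -> 0 <= (F *m Y *m adjmx F) i i.
Proof.
move=> hY; have := hY (adjmx (row i F)); rewrite adjmxK.
suff -> : (F *m Y *m adjmx F) i i = (row i F *m Y *m adjmx (row i F)) 0 0 by [].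
rewrite !mxE; apply: eq_bigr => k _; rewrite !adjmxE !mxE.
congr (_ * _); apply: eq_bigr => l _; by rewrite !mxE.
Qed.

Lemma tstar_adj m p (A : 'M[C]_(m, p)) : map_mx Num.conj (A ^T) = adjmx A.
Proof. by rewrite /adjmx map_trmx. Qed.

Lemma psd_factor (E : 'M[C]_n) : psdmx E -> exists F : 'M[C]_n, E = adjmx F *m F.
Proof.
move=> hE; have hH := psd_herm hE.
have hN : E \is normalmx by apply/normalmxP; rewrite tstar_adj hH.
have := orthomx_spectralP hN.
set P := spectralmx E; set d := spectral_diag E => hEd.
have hU : P \is unitarymx by apply: spectral_unitarymx.
have hPP : P *m adjmx P = 1%:M by rewrite -tstar_adj; apply/unitarymxP.
rewrite invmx_unitary // tstar_adj in hEd.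
have hD : P *m E *m adjmx P = diag_mx d.
  by rewrite hEd !mulmxA hPP mul1mx -mulmxA hPP mulmx1.
have hd : forall i, 0 <= d 0 i.
  move=> i; have := @psd_entry _ E P i hE; rewrite hD mxE eqxx mulr1n.
  by [].
exists (diag_mx (map_mx sqrtC d) *m P).
rewrite adjmxM adjmx_diag !mulmxA -[adjmx P *m _ *m _]mulmxA mulmx_diag.
rewrite hEd; congr (_ *m _ *m _); congr diag_mx; apply/matrixP=> i j.
rewrite !mxE ord1 conj_Creal ?ger0_real ?sqrtC_ge0 ?hd // -expr2 sqrtCK //.
Qed.

End Factor.

Section Success.
Variables (C : numClosedFieldType) (N M : nat).
Local Notation n := (N * M).
Variables (T T' : nat -> 'M[C]_n -> 'M[C]_n).
Hypothesis hT : forall j, channel (T j) /\ channel (T' j).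
Local Notation b0 := (@Ordinal 2 0 isT).
Local Notation b1 := (@Ordinal 2 1 isT).
Local Notation R2 := (row2 (1%:M : 'M[C]_n) (- 1%:M)).
Local Notation run := (run T T').

Definition Dm (Y : 'M[C]_(2 * n)) : 'M[C]_n :=
  blk b0 b0 Y - blk b0 b1 Y - blk b1 b0 Y + blk b1 b1 Y.

Lemma sfG (Y : 'M[C]_(2 * n)) (G : 'M[C]_n) :
  sf Y (row2 G (- G)) (row2 G (- G)) = \tr (adjmx G *m G *m Dm Y).
Proof.
rewrite -mulmxA mxtrace_mulC -mulmxA /sf row2_mul /Dm.
rewrite !adjmxN !mulmxN !mulNmx !opprK !mulmxDl !mulmxDr ?mulmxBl ?mulmxBr ?mulmxN ?mulNmx.
rewrite !mulmxA !mxtraceD ?raddfB ?raddfN /=.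
by rewrite !mulmxA.
Qed.

Lemma trDm (Y : 'M[C]_(2 * n)) : \tr (Dm Y) = sf Y R2 R2.
Proof. by rewrite dqE /Dm !mxtraceD !raddfN. Qed.

Lemma sfG_le (Y : 'M[C]_(2 * n)) (G : 'I_N -> 'M[C]_n) x : psdmx Y ->
  \sum_y adjmx (G y) *m G y = 1%:M ->
  sf Y (row2 (G x) (- G x)) (row2 (G x) (- G x)) <= sf Y R2 R2.
Proof.
move=> hY hG.
have -> : sf Y R2 R2 = \sum_y sf Y (row2 (G y) (- G y)) (row2 (G y) (- G y)).
  under eq_bigr => y _ do rewrite sfG.
  by rewrite -raddf_sum -mulmx_suml hG mul1mx -trDm.
rewrite (bigD1 x) //= lerDl; apply: sumr_ge0 => y _; exact: tr_psd.
Qed.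

Lemma run_tr O j m s : (forall A, \tr (O A) = \tr A) -> \tr (run O j m s) = \tr s.
Proof.
move=> hO; elim: m => //= m IH; have [[_ _ tp] [_ _ tp']] := hT (j + m).
by rewrite tp' hO tp.
Qed.

Lemma tr_oracle x (A : 'M[C]_n) : \tr (oracle x A) = \tr A.
Proof. by rewrite oracleE mxtrace_mulC mulmxA sgn_sq mul1mx. Qed.

Lemma succ_run j s0 (E : 'I_N -> 'M[C]_n) : psdmx s0 -> \tr s0 = 1 -> povm E ->
  forall m, (0 < m)%N ->
  \sum_(x < N) \tr (run (oracle x) j m s0 *m E x) <= (1 + 2 * m%:R) ^+ 2.
Proof.
move=> hs htr [hEp hEs] m hm.
have [F hF] : exists F : 'I_N -> 'M[C]_n, forall x, E x = adjmx (F x) *m F x.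
  exact: (@fin_all_exists _ (fun=> 'M[C]_n) (fun x F => E x = adjmx F *m F)
           (fun x => psd_factor (hEp x))).
have [Y hY] := @fin_all_exists _ (fun=> 'M[C]_(2 * n)) _ (fun x => hyb hT x j hs m).
have hFs : \sum_y adjmx (F y) *m F y = 1%:M.
  by rewrite -hEs; apply: eq_bigr => y _; rewrite hF.
have hl : 0 < (2 * m%:R : C) by rewrite mulr_gt0 // ltr0n.
have key : forall x, \tr (run (oracle x) j m s0 *m E x) <=
   (1 + 2 * m%:R) * \tr (E x *m run id j m s0) +
   (1 + (2 * m%:R)^-1) * (4 * m%:R * \sum_(t < m) av T T' x j s0 t).
  move=> x; have [hY1 e0 e1 ed] := hY x.
  have -> : \tr (run (oracle x) j m s0 *m E x) =
      sf (Y x) (row2 0 (F x) + row2 (F x) (- F x)) (row2 0 (F x) + row2 (F x) (- F x)).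
    rewrite -row2D add0r addrN /sf row2_mul !adjmx0 !mulmx0 !mul0mx !addr0.
    by rewrite -e0 hF mulmxA mxtrace_mulC mulmxA.
  apply: le_trans (sf_ineq _ _ hY1 hl) _.
  apply: lerD.
    rewrite /sf row2_mul !adjmx0 !mulmx0 !mul0mx !add0r e1 hF.
    have -> : \tr (adjmx (F x) *m F x *m run id j m s0) =
      \tr (F x *m run id j m s0 *m adjmx (F x)) by rewrite -mulmxA mxtrace_mulC.
    by [].
  apply: ler_wpM2l; first by rewrite addr_ge0 // ltW // invr_gt0.
  exact: le_trans (sfG_le x hY1 hFs) ed.
apply: le_trans (ler_sum _ (fun x _ => key x)) _.
rewrite big_split /= -!mulr_sumr.
have h1 : \sum_(i < N) \tr (E i *m run id j m s0) = 1.
  by rewrite -raddf_sum -mulmx_suml hEs mul1mx /= run_tr.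
have h2 : \sum_(i < N) \sum_(t < m) av T T' i j s0 t = m%:R.
  rewrite exchange_big /= (eq_bigr (fun=> 1)) ?sumr_const ?card_ord //.
  move=> t _; rewrite /av -raddf_sum -mulmx_suml sum_prj mul1mx /=.
  by have [[_ _ tp] _] := hT (j + t); rewrite tp run_tr.
rewrite h1 h2 le_eqVlt; apply/orP; left; apply/eqP.
have hm0 : (m%:R : C) != 0 by rewrite pnatr_eq0 -lt0n.
by field.
Qed.

End Success.

Section Decomp.
Variables (C : numClosedFieldType) (N M : nat).
Local Notation n := (N * M).
Variables (T T' : nat -> 'M[C]_n -> 'M[C]_n).
Hypothesis hT : forall j, channel (T j) /\ channel (T' j).
Local Notation run := (run T T').

Lemma lin0 (f : 'M[C]_n -> 'M[C]_n) : linear_map f -> f 0 = 0.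
Proof.
move=> hf; have := hf 1 0 0; rewrite !scale1r addr0 => h.
by apply: (addrI (f 0)); rewrite addr0 -h.
Qed.

Lemma linZD (f : 'M[C]_n -> 'M[C]_n) a A B : linear_map f -> f (a *: A + B) = a *: f A + f B.
Proof. by move=> hf; apply: hf. Qed.

Lemma linZ (f : 'M[C]_n -> 'M[C]_n) a A : linear_map f -> f (a *: A) = a *: f A.
Proof. by move=> hf; rewrite -[a *: A]addr0 hf lin0 // addr0. Qed.

Lemma linD (f : 'M[C]_n -> 'M[C]_n) A B : linear_map f -> f (A + B) = f A + f B.
Proof. by move=> hf; have := hf 1 A B; rewrite !scale1r. Qed.

Lemma lin_sum (f : 'M[C]_n -> 'M[C]_n) k (c : 'I_k -> C) (X : 'I_k -> 'M[C]_n) :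
  linear_map f -> f (\sum_(i < k) c i *: X i) = \sum_(i < k) c i *: f (X i).
Proof.
move=> hf; elim: k c X => [|k IH] c X; first by rewrite !big_ord0 lin0.
by rewrite !big_ord_recr /= linD // linZ // IH.
Qed.

Lemma oracle_lin (x : 'I_N) : linear_map (@oracle C N M x).
Proof.
by move=> a A B; rewrite !oracleE mulmxDr mulmxDl -scalemxAr -scalemxAl.
Qed.

Lemma step_lin (x : 'I_N) t : linear_map (fun A => T' t (oracle x (T t A))).
Proof.
have [[lT _ _] [lT' _ _]] := hT t.
by move=> a A B; rewrite lT oracle_lin lT'.
Qed.

Lemma tr_noise (p : C) tau (A : 'M[C]_n) : \tr tau = 1 ->
  \tr (noise p tau A) = \tr A.
Proof.
by move=> ht; rewrite /noise mxtraceD !mxtraceZ ht mulr1; ring.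
Qed.

Lemma tr_evolve (p : C) tau rho0 x k : \tr tau = 1 ->
  \tr (evolve p tau rho0 T T' x k) = \tr rho0.
Proof.
move=> ht; elim: k => //= k IH.
have [[_ _ tp] [_ _ tp']] := hT k.
by rewrite tp' tr_oracle tp tr_noise.
Qed.

Lemma decomp (p : C) tau rho0 x k : \tr tau = 1 -> \tr rho0 = 1 ->
  evolve p tau rho0 T T' x k = (1 - p) ^+ k *: run (oracle x) 0 k rho0 +
     \sum_(i < k) (p * (1 - p) ^+ i) *: run (oracle x) (k - i.+1) i.+1 tau.
Proof.
move=> ht hr; elim: k => [|k IH].
  by rewrite /= big_ord0 expr0 scale1r addr0.
have hev : \tr (evolve p tau rho0 T T' x k) = 1 by rewrite tr_evolve.
pose f := fun A => T' k (oracle x (T k A)).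
have hf : linear_map f := step_lin x k.
transitivity (f (noise p tau (evolve p tau rho0 T T' x k))); first by [].
rewrite /noise hev scale1r (@linZD f p tau _ hf) (@linZ f _ _ hf) IH (@linD f _ _ hf) (@linZ f _ _ hf).
rewrite (@lin_sum f k (fun i => p * (1 - p) ^+ i)
   (fun i : 'I_k => run (oracle x) (k - i.+1) i.+1 tau) hf).
have e1 : f tau = run (oracle x) (k.+1 - 1) 1 tau by rewrite subn1 /= addn0.
have e2 : forall i : 'I_k,
    f (run (oracle x) (k - i.+1) i.+1 tau) = run (oracle x) (k.+1 - i.+2) i.+2 tau.
  by move=> i; rewrite subSS /= subnK.
have e0 : f (run (oracle x) 0 k rho0) = run (oracle x) 0 k.+1 rho0 by [].
rewrite e0 e1 big_ord_recl expr0 mulr1 scalerDr scalerA -exprS.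
under eq_bigr => i _ do rewrite e2.
rewrite scaler_sumr addrCA; congr (_ + (_ + _)).
apply: eq_bigr => i _; rewrite scalerA; congr (_ *: _).
by rewrite exprS; ring.
Qed.

End Decomp.

Section RealBound.
Variables (R : rcfType) (p : R).
Hypotheses (hp0 : 0 < p) (hp1 : p <= 1).
Local Notation q := (1 - p).

Definition GR k := q ^+ k * (1 + 2 * k%:R) ^+ 2 +
  \sum_(i < k) p * q ^+ i * (1 + 2 * i.+1%:R) ^+ 2.
Definition HR k := \sum_(i < k) i.+1%:R * q ^+ i.
Definition KR k := \sum_(i < k) q ^+ i.

Lemma GR_H k : GR k = 1 + 8 * HR k.
Proof.
elim: k => [|k IH]; first by rewrite /GR /HR !big_ord0 expr0 mul1r addr0 mulr0 addr0 mulr0 addr0 expr1n.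
have -> : GR k.+1 = GR k + q ^+ k * (8 * k.+1%:R).
  rewrite /GR big_ord_recr /= exprS -!natr1; ring.
by rewrite IH /HR big_ord_recr /=; ring.
Qed.

Lemma HR_closed k : p ^+ 2 * HR k = 1 - q ^+ k * (1 + k%:R * p).
Proof.
elim: k => [|k IH]; first by rewrite /HR big_ord0 expr0 mulr0 mul0r addr0 mul1r subrr.
rewrite /HR big_ord_recr /= mulrDr -/(HR k) IH [_ ^+ k.+1]exprS -!natr1; ring.
Qed.

Lemma KR_closed k : p * KR k = 1 - q ^+ k.
Proof.
elim: k => [|k IH]; first by rewrite /KR big_ord0 mulr0 expr0 subrr.
by rewrite /KR big_ord_recr /= mulrDr -/(KR k) IH exprS; ring.
Qed.

Lemma q_ge0 : 0 <= q. Proof. by rewrite subr_ge0. Qed.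

Lemma GR_bound1 k : GR k <= 1 + 8 / p ^+ 2.
Proof.
rewrite GR_H lerD2l ler_pM2l // -[(p ^+ 2)^-1]mulr1 ler_pdivlMl ?exprn_gt0 // HR_closed.
rewrite gerBl mulr_ge0 ?exprn_ge0 ?q_ge0 // addr_ge0 // mulr_ge0 // ltW //.
Qed.

Lemma GR_bound2 k : GR k <= 8 * (k%:R + 1) / p.
Proof.
have hH : HR k <= k%:R * KR k.
  rewrite /HR /KR mulr_sumr; apply: ler_sum => i _.
  apply: ler_wpM2r; first by rewrite exprn_ge0 // q_ge0.
  by rewrite ler_nat.
have hK : p * KR k <= 1 by rewrite KR_closed gerBl exprn_ge0 // q_ge0.
have hpH : p * HR k <= k%:R.
  apply: le_trans (ler_wpM2l (ltW hp0) hH) _.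
  rewrite mulrCA -[X in _ <= X]mulr1; apply: ler_wpM2l => //.
rewrite GR_H ler_pdivlMr //.
have -> : (1 + 8 * HR k) * p = p + 8 * (p * HR k) by ring.
rewrite mulrDr mulr1 addrC; apply: lerD; first by rewrite ler_pM2l.
by apply: le_trans hp1 _; rewrite ler1n.
Qed.

End RealBound.

Lemma channel_id (C : numClosedFieldType) n : channel (fun A : 'M[C]_n => A).
Proof.
split=> //; move=> k X hX.
suff -> : ampliate (fun A : 'M[C]_n => A) X = X by [].
by apply/matrixP=> i j; rewrite /ampliate !mxE !mxtens_unindexK.
Qed.

Unset Implicit Arguments.
Theorem theorem1 (R : rcfType) (N M : nat) (hN : (1 <= N)%N) (hM : (1 <= M)%N)
  (rho0 tau : 'M[R[i]]_(N * M)) (p : R) (k : nat) (hk : (1 <= k)%N)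
  (T T' : nat -> 'M[R[i]]_(N * M) -> 'M[R[i]]_(N * M))
  (E : 'I_N -> 'M[R[i]]_(N * M)) :
  density rho0 -> density tau ->
  0 < p -> p <= 1 ->
  (forall j, (j < k)%N -> channel (T j) /\ channel (T' j)) ->
  povm E ->
  let ps := success_prob (p%:C)%C tau rho0 T T' k E in
  ps <= (N%:R^-1 + 8 / (N%:R * (p%:C)%C ^+ 2))
  /\ ps <= 8 * (k%:R + 1) / (N%:R * (p%:C)%C).
Proof.
move=> [hr0p hr0t] [htp htt] hp0 hp1 hch hE ps.
pose T2 := fun j => if (j < k)%N then T j else (fun A : 'M[R[i]]_(N * M) => A).
pose T2' := fun j => if (j < k)%N then T' j else (fun A : 'M[R[i]]_(N * M) => A).
have hT2 : forall j, channel (T2 j) /\ channel (T2' j).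
  move=> j; rewrite /T2 /T2'; case: ifP => h; first exact: hch.
  by split; apply: channel_id.
have hev : forall x, evolve (p%:C)%C tau rho0 T T' x k =
                     evolve (p%:C)%C tau rho0 T2 T2' x k.
  move=> x; suff : forall m, (m <= k)%N -> evolve (p%:C)%C tau rho0 T T' x m =
                     evolve (p%:C)%C tau rho0 T2 T2' x m by apply.
  elim=> [//|m IH] hm /=; rewrite IH ?(ltnW hm) // /T2 /T2' hm.
  by [].
set pc := (p%:C)%C.
set q := 1 - pc.
have eps : ps = N%:R^-1 * \sum_(x < N) \tr (evolve pc tau rho0 T2 T2' x k *m E x).
  by rewrite /ps /success_prob mulr_sumr; apply: eq_bigr => x _; rewrite hev.
have hq : 0 <= q by rewrite /q -[1](rmorph1 (real_complex R)) -rmorphB ler0c subr_ge0.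
have hpc : 0 <= pc by rewrite /pc ler0c ltW.
have hS : \sum_(x < N) \tr (evolve pc tau rho0 T2 T2' x k *m E x) <=
   q ^+ k * (1 + 2 * k%:R) ^+ 2 +
   \sum_(i < k) pc * q ^+ i * (1 + 2 * i.+1%:R) ^+ 2.
  have -> : \sum_(x < N) \tr (evolve pc tau rho0 T2 T2' x k *m E x) =
     q ^+ k * \sum_(x < N) \tr (run T2 T2' (oracle x) 0 k rho0 *m E x) +
     \sum_(i < k) pc * q ^+ i *
        \sum_(x < N) \tr (run T2 T2' (oracle x) (k - i.+1) i.+1 tau *m E x).
    rewrite [in RHS]mulr_sumr.
    under [X in _ = _ + X]eq_bigr => i _ do rewrite mulr_sumr.
    rewrite [X in _ = _ + X]exchange_big /= -big_split /=; apply: eq_bigr => x _.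
    rewrite (decomp hT2) // mulmxDl mxtraceD -scalemxAl mxtraceZ mulmx_suml raddf_sum.
    congr (_ + _); apply: eq_bigr => i _.
    by rewrite -scalemxAl; apply: mxtraceZ.
  apply: lerD.
    by apply: ler_wpM2l; [exact: exprn_ge0 | apply: (succ_run hT2)].
  apply: ler_sum => i _; apply: ler_wpM2l; first by rewrite mulr_ge0 // exprn_ge0.
  exact: (succ_run hT2).
have eG : q ^+ k * (1 + 2 * k%:R) ^+ 2 +
   \sum_(i < k) pc * q ^+ i * (1 + 2 * i.+1%:R) ^+ 2 = ((GR p k)%:C)%C.
  rewrite /GR rmorphD rmorph_sum /= !rmorphM !rmorphXn /= rmorphB rmorph1 !rmorphD.
  rewrite !rmorphM !rmorph1 !rmorph_nat; congr (_ + _); apply: eq_bigr => i _.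
  rewrite !rmorphM !rmorphXn rmorphB !rmorphD !rmorph1 !rmorphM !rmorph_nat.
  by rewrite expr2.
rewrite eG in hS.
have hN0 : 0 < (N%:R : R) by rewrite ltr0n.
have hNc : (N%:R : R[i]) = ((N%:R : R)%:C)%C by rewrite rmorph_nat.
have hps : ps <= (((N%:R : R)^-1 * GR p k)%:C)%C.
  rewrite eps rmorphM fmorphV /= -hNc; apply: ler_wpM2l => //.
  by rewrite invr_ge0 ler0n.
split; apply: le_trans hps _.
  have -> : (N%:R^-1 + 8 / (N%:R * pc ^+ 2) : R[i]) =
            ((((N%:R : R)^-1 + 8 / ((N%:R : R) * p ^+ 2)))%:C)%C.
    by rewrite !(rmorphD, rmorphM, fmorphV, rmorphXn, rmorph_nat).
  rewrite lecR.
  have -> : (N%:R : R)^-1 + 8 / (N%:R * p ^+ 2) = (N%:R : R)^-1 * (1 + 8 / p ^+ 2).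
    by field; rewrite !gt_eqF.
  by rewrite ler_pM2l ?invr_gt0 // GR_bound1.
have -> : (8 * (k%:R + 1) / (N%:R * pc) : R[i]) =
          (((8 * (k%:R + 1) / ((N%:R : R) * p)))%:C)%C.
  by rewrite !(rmorphD, rmorphM, fmorphV, rmorph1, rmorph_nat).
rewrite lecR.
have -> : 8 * (k%:R + 1) / ((N%:R : R) * p) = (N%:R : R)^-1 * (8 * (k%:R + 1) / p).
  by field; rewrite !gt_eqF.
by rewrite ler_pM2l ?invr_gt0 // GR_bound2.
Qed.
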